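(* Let $m\ge3$ be odd and suppose $B,D\subseteq\mathbb{Z}_m$ are $2$-$\{m;k,r;k+r-\frac{m+1}{2}\}$ ASDS with $0\notin B$ and $m-1\notin D$. Then \[ \frac{(m-1)^2}{2}\le (k+r)m-(k^2+r^2)\le\frac{m^2-1}{2}. \]
   Context: For $B,D\subseteq\mathbb{Z}_m$ and $a\in\mathbb{Z}_m\setminus\{0\}$, let $N_{B,D}(a)=|\{(x,x')\in B\times B: x-x'\equiv a\}|+|\{(y,y')\in D\times D: y-y'\equiv a\}|$. For an integer $\mu$, $B$ and $D$ are $2$-$\{m;k,r;\mu\}$ ASDS if $|B|=k$, $|D|=r$ and $N_{B,D}(a)\in\{\mu,\mu+1\}$ for every $a\in\mathbb{Z}_m\setminus\{0\}$. *)

(* Defs.v *)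
From HB Require Import structures.
From mathcomp Require Import all_boot all_order all_algebra.
Set Implicit Arguments. Unset Strict Implicit. Unset Printing Implicit Defensive.
Import Order.TTheory GRing.Theory Num.Theory.

(* N_{B,D}(a): number of ordered pairs (x,x') in B x B with x - x' = a,
   plus the same count for D.  Here 'Z_m is Z/mZ (requires 1 < m). *)
Definition ndiff (m : nat) (B D : {set 'Z_m}) (a : 'Z_m) : nat :=
  #|[set p : 'Z_m * 'Z_m | [&& p.1 \in B, p.2 \in B & (p.1 - p.2)%R == a]]|
  + #|[set p : 'Z_m * 'Z_m | [&& p.1 \in D, p.2 \in D & (p.1 - p.2)%R == a]]|.

Definition ASDS2 (m k r : nat) (mu : int) (B D : {set 'Z_m}) : Prop :=
  #|B| = k /\ #|D| = r /\
  forall a : 'Z_m, a != 0%R ->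
    (Posz (ndiff B D a) = mu \/ Posz (ndiff B D a) = (mu + 1)%R).

(* Main.v *)
Require Import Defs.
From HB Require Import structures.
From mathcomp Require Import all_boot all_order all_algebra.
From mathcomp Require Import zify ring lra.
Import Order.TTheory GRing.Theory Num.Theory.

Definition Sd (m : nat) (B : {set 'Z_m}) (a : 'Z_m) :=
  [set p : 'Z_m * 'Z_m | [&& p.1 \in B, p.2 \in B & (p.1 - p.2)%R == a]].

Lemma S0 m (B : {set 'Z_m}) : #|Sd m B 0%R| = #|B|.
Proof.
have -> : Sd m B 0%R = (fun x => (x, x)) @: B.
  apply/setP => -[x y]; rewrite !inE /= subr_eq0.
  apply/idP/imsetP => [/and3P[xB yB /eqP ->]|[z zB [-> ->]]]; first by exists y.
  by rewrite zB eqxx.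
by rewrite card_imset // => x y [].
Qed.

Lemma sumS m (B : {set 'Z_m}) :
  (\sum_(a | a != 0%R) #|Sd m B a| + #|B| = #|B| * #|B|)%N.
Proof.
have H : (\sum_a #|Sd m B a| = #|setX B B|)%N.
  rewrite -sum1_card (partition_big (fun p : 'Z_m * 'Z_m => (p.1 - p.2)%R) predT) //=.
  apply: eq_bigr => a _; rewrite -sum1_card; apply: eq_bigl => p.
  by rewrite !inE; case: p => x y /=; rewrite andbA.
rewrite (bigD1 0%R) //= S0 cardsX in H.
by rewrite -H addnC.
Qed.

Theorem corollary5 (m k r : nat) (B D : {set 'Z_m}) :
  3 <= m -> odd m ->
  ASDS2 k r (Posz (k + r) - Posz (m.+1 %/ 2))%R B D ->
  (0%R : 'Z_m) \notin B ->
  ((m.-1)%:R : 'Z_m)%R \notin D ->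
  (((m%:Q - 1)%R ^+ 2 / 2 <= (k + r)%:Q * m%:Q - (k%:Q ^+ 2 + r%:Q ^+ 2))
   /\ ((k + r)%:Q * m%:Q - (k%:Q ^+ 2 + r%:Q ^+ 2) <= (m%:Q ^+ 2 - 1) / 2))%R.
Proof.
move=> m3 om [cB [cD H]] _ _.
have [t mt] : exists t, m = t.*2.+1.
  by exists m./2; rewrite -[in LHS](odd_double_half m) om.
have mh : m.+1 %/ 2 = t.+1 by rewrite mt; lia.
rewrite mh in H.
have cZ : #|[pred a : 'Z_m | a != 0%R]| = m.-1.
  by rewrite cardC1 card_ord /Zp_trunc; lia.
have Hb : forall a : 'Z_m, a != 0%R ->
   (k + r <= #|Sd m B a| + #|Sd m D a| + t.+1 <= k + r + 1)%N.
  move=> a /H; rewrite /ndiff -/(Sd m B a) -/(Sd m D a).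
  case=> E; lia.
have Hs : (\sum_(a | a != 0%R) (#|Sd m B a| + #|Sd m D a|) + k + r = k * k + r * r)%N.
  by rewrite big_split /= -cB -cD -(sumS m B) -(sumS m D); ring.
have L1 : (\sum_(a : 'Z_m | a != 0%R) (k + r) <= \sum_(a | a != 0%R) (#|Sd m B a| + #|Sd m D a| + t.+1))%N.
  by apply: leq_sum => a /Hb /andP[].
have L2 : (\sum_(a | a != 0%R) (#|Sd m B a| + #|Sd m D a| + t.+1) <= \sum_(a : 'Z_m | a != 0%R) (k + r + 1 : nat))%N.
  by apply: leq_sum => a /Hb /andP[].
rewrite big_split /= !sum_nat_const cZ in L1 L2.
have Hs2 : (\sum_(a | a != 0%R) (#|Sd m B a| + #|Sd m D a| + t.+1)
   = \sum_(a | a != 0%R) (#|Sd m B a| + #|Sd m D a|) + m.-1 * t.+1)%N.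
  by rewrite big_split /= sum_nat_const cZ.
rewrite Hs2 in L1 L2.
move: L1 L2 Hs; set N := \sum_(a | _) _ => L1 L2 Hs.
have P1 : (t.*2 * (k + r) + k + r <= k * k + r * r + t.*2 * t.+1)%N.
  rewrite mt /= in L1; nia.
have P2 : (k * k + r * r + t.*2 * t.+1 <= t.*2 * (k + r + 1) + k + r)%N.
  rewrite mt /= in L2; nia.
have Q1 : ((t.*2 * (k + r) + k + r)%:R <= (k * k + r * r + t.*2 * t.+1)%:R :> rat)%R.
  by rewrite ler_nat.
have Q2 : ((k * k + r * r + t.*2 * t.+1)%:R <= (t.*2 * (k + r + 1) + k + r)%:R :> rat)%R.
  by rewrite ler_nat.
rewrite -!muln2 !(natrD, natrM, mulrSr, mulr0n) in Q1 Q2.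
rewrite -!pmulrn mt -!muln2 !(natrD, natrM, mulrSr, mulr0n).
move: Q1 Q2; rewrite !add0r; move: (t%:R : rat) (k%:R : rat) (r%:R : rat) => T K R Q1 Q2.
split; rewrite -subr_ge0.
  have -> : (((K + R) * (T * (1 + 1) + 1) - (K ^+ 2 + R ^+ 2) -
    (T * (1 + 1) + 1 - 1) ^+ 2 / (1 + 1)) =
    (T * (1 + 1) * (K + R + 1) + K + R) - (K * K + R * R + T * (1 + 1) * (T + 1)))%R.
    by field.
  by rewrite subr_ge0.
have -> : ((((T * (1 + 1) + 1) ^+ 2 - 1) / (1 + 1) - ((K + R) * (T * (1 + 1) + 1) - (K ^+ 2 + R ^+ 2))) =
  (K * K + R * R + T * (1 + 1) * (T + 1)) - (T * (1 + 1) * (K + R) + K + R))%R.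
  by field.
by rewrite subr_ge0.
Qed.
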